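(* Assume the standing setting below and run the DMFW algorithm with $\gamma_k=\frac{2}{k+1}$ and $\eta_k=\frac{2}{k+2}$. Then for every $i\in\mathcal N$ and $k\ge1$, $$\mathbb E\|y_k^i\|\le\psi.$$
   Context: Setting. There are $n$ agents $\mathcal N=\{1,\dots,n\}$ connected by a connected graph $\mathcal G=(\mathcal N,\mathcal E)$ with weight matrix $C=[c_{ij}]\in\mathbb R^{n\times n}$, where $c_{ij}\ge 0$ and $c_{ij}=0$ whenever $j\ne i$ and $(i,j)\notin\mathcal E$. $C$ is doubly stochastic, i.e. all row sums and all column sums equal $1$. Let $\lambda$ be the second largest eigenvalue of $C$ in magnitude. It is assumed that $|\lambda|<1$ and that for all vectors $x^1,\dots,x^n\in\mathbb R^p$, with $\bar x=\frac1n\sum_i x^i$ and $\hat x^i=\sum_j c_{ij}x^j$, one has $\big(\sum_i\|\hat x^i-\bar x\|^2\big)^{1/2}\le|\lambda|\big(\sum_i\|x^i-\bar x\|^2\big)^{1/2}$. Let $k_0$ be the smallest positive integer with $|\lambda|\le (k_0/(k_0+1))^2$. Problem data. $\mathcal X\subset\mathbb R^p$ is convex and compact with diameter $D$, i.e. $\|x-x'\|\le D$ for all $x,x'\in\mathcal X$. For each $i$, $\xi^i$ is a random variable. The function $f_i(\cdot,\xi)$ is differentiable with $L$-Lipschitz gradient for every $\xi$. $F_i(x)=\mathbb E[f_i(x,\xi^i)]$ is differentiable with $\nabla F_i(x)=\mathbb E[\nabla f_i(x,\xi^i)]$ and $L$-Lipschitz gradient. For all $x\in\mathcal X$ and $i$,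 $\mathbb E\|\nabla F_i(x)-\nabla f_i(x,\xi^i)\|^2\le\delta^2$. Set $F=\frac1n\sum_{i=1}^nF_i$. $G>0$ is a constant with $\mathbb E\|\nabla f_i(x,\xi^i)\|^2\le G^2$ and $\mathbb E\|\nabla f_i(x,\xi^i)\|\le G$ for all $x\in\mathcal X$ and $i\in\mathcal N$. DMFW algorithm. Fix step sizes $\gamma_k,\eta_k\in(0,1]$ and deterministic initial points $x_1^i\in\mathcal X$. The samples $\xi_k^i$ ($k\ge1$, $i\in\mathcal N$) are mutually independent, and $\xi_k^i$ has the distribution of $\xi^i$. For $k=1,2,\dots$ and each $i$: - $\hat x_k^i=\sum_{j=1}^n c_{ij}x_k^j$. - For $k=1$: $y_1^i=s_1^i=\nabla f_i(\hat x_1^i,\xi_1^i)$. For $k\ge2$: $y_k^i=(1-\gamma_k)y_{k-1}^i+\nabla f_i(\hat x_k^i,\xi_k^i)-(1-\gamma_k)\nabla f_i(\hat x_{k-1}^i,\xi_k^i)$ and $s_k^i=\sum_j c_{ij}s_{k-1}^j+y_k^i-y_{k-1}^i$. - $p_k^i=\sum_j c_{ij}s_k^j$. - $\theta_k^i\in\arg\min_{\phi\in\mathcal X}\langle p_k^i,\phi\rangle$. - $x_{k+1}^i=\hat x_k^i+\eta_k(\theta_k^i-\hat x_k^i)$. Constants: - $C_1=k_0\sqrt n D$. - $\psi=\max\{\max_i\mathbb E\|y_1^i\|,\ 2G+2L(D+2C_1)\}$. *)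

(* Defs.v *)
From HB Require Import structures.
From mathcomp Require Import all_boot all_order all_algebra.
From mathcomp Require Import all_classical all_reals all_analysis.
From mathcomp Require Import complex.

Set Implicit Arguments.
Unset Strict Implicit.
Unset Printing Implicit Defensive.

Import Order.TTheory GRing.Theory Num.Theory.
Import numFieldNormedType.Exports.
Local Open Scope classical_set_scope.
Local Open Scope ring_scope.

Section DMFWDefs.
Variable R : realType.
Local Notation RC := (complex.complex (R : rcfType)).

Definition dot (p : nat) (u v : 'rV[R]_p) : R := \sum_(j < p) u 0 j * v 0 j.
Definition enorm (p : nat) (v : 'rV[R]_p) : R := Num.sqrt (dot v v).

Definition has_grad (p : nat) (h : 'rV[R]_p -> R^o) (x v : 'rV[R]_p) : Prop :=
  differentiable h x /\ forall u, 'd h x u = dot v u.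

Definition cmod (z : RC) : R :=
  Num.sqrt (complex.Re z ^+ 2 + complex.Im z ^+ 2).

(* [slam] is |lambda|, the modulus of the second largest (in magnitude)
   eigenvalue of C, eigenvalues counted with algebraic multiplicity and
   computed over the complex numbers. *)
Definition second_eig_modulus (n : nat) (C : 'M[R]_n) (slam : R) : Prop :=
  exists rs : seq RC,
    char_poly (map_mx (fun x : R => (complex.Complex x 0 : RC)) C)
      = \prod_(r <- rs) ('X - r%:P) /\
    slam = nth 0 (sort (fun a b : R => b <= a) (map cmod rs)) 1.

Definition vec_meas (p : nat) d (T : measurableType d) (h : T -> 'rV[R]_p) :=
  forall j : 'I_p, measurable_fun setT (fun t => h t 0 j).

Definition borel_vmap (p : nat) (phi : 'rV[R]_p -> 'rV[R]_p) : Prop :=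
  forall d (T : measurableType d) (h : T -> 'rV[R]_p),
    vec_meas h -> vec_meas (phi \o h).

Definition mutually_independent d (Omega : measurableType d)
  (P : probability Omega R) d' (Xi : measurableType d') (I : eqType)
  (J : set I) (Y : I -> Omega -> Xi) : Prop :=
  forall s : seq I, uniq s -> (forall j, j \in s -> J j) ->
  forall A : I -> set Xi, (forall j, measurable (A j)) ->
    P (\bigcap_(j in [set` s]) (Y j @^-1` A j)) =
    (\prod_(j <- s) P (Y j @^-1` A j))%E.

Definition mix (n p : nat) (C : 'M[R]_n) (v : 'I_n -> 'rV[R]_p) : 'I_n -> 'rV[R]_p :=
  fun i => \sum_(j < n) C i j *: v j.

Section Algo.
Variables (n p : nat) (Xi : Type) (C : 'M[R]_n)
  (g : 'I_n -> 'rV[R]_p -> Xi -> 'rV[R]_p)   (* g i x xi = grad_x f_i(x, xi) *)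
  (lmo : nat -> 'I_n -> 'rV[R]_p -> 'rV[R]_p) (* theta_k^i = lmo k i p_k^i *)
  (gam eta : nat -> R) (x1 : 'I_n -> 'rV[R]_p)
  (xs : nat -> 'I_n -> Xi).

Local Notation vecs := ('I_n -> 'rV[R]_p).

(* dmfw_st m = (x_k, xhat_k, y_k, s_k) with k = m+1 *)
Fixpoint dmfw_st (m : nat) : vecs * vecs * vecs * vecs :=
  match m with
  | 0 =>
      let xh := mix C x1 in
      let y := fun i => g i (xh i) (xs 1 i) in
      (x1, xh, y, y)
  | m'.+1 =>
      let '(x, xh, y, s) := dmfw_st m' in
      let kp := m'.+1 in
      let k := m'.+2 in
      let pk := mix C s in
      let th := fun i => lmo kp i (pk i) in
      let x' := fun i => xh i + eta kp *: (th i - xh i) in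
      let xh' := mix C x' in
      let y' := fun i => (1 - gam k) *: y i + g i (xh' i) (xs k i)
                         - (1 - gam k) *: g i (xh i) (xs k i) in
      let s' := fun i => mix C s i + y' i - y i in
      (x', xh', y', s')
  end.

(* y_k^i for k >= 1 *)
Definition dmfw_y (k : nat) (i : 'I_n) : 'rV[R]_p := (dmfw_st k.-1).1.2 i.
End Algo.

End DMFWDefs.

(* Main.v *)
Require Import Defs.
From HB Require Import structures.
From mathcomp Require Import all_boot all_order all_algebra.
From mathcomp Require Import all_classical all_reals all_analysis.
From mathcomp Require complex.
From mathcomp Require Import measurable_realfun lra ring.

Import Order.TTheory GRing.Theory Num.Theory.
Import numFieldNormedType.Exports.
Local Open Scope classical_set_scope.
Local Open Scope ring_scope.

Set Implicit Arguments.
Unset Strict Implicit.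
Unset Printing Implicit Defensive.


Section Norms.
Variable R : realType.

Lemma cs_ineq (T : finType) (a b : T -> R) :
  (\sum_t a t * b t) ^+ 2 <= (\sum_t a t ^+ 2) * (\sum_t b t ^+ 2).
Proof.
have H : 0 <= \sum_i \sum_j (a i * b j - a j * b i) ^+ 2.
  by apply: sumr_ge0 => i _; apply: sumr_ge0 => j _; exact: sqr_ge0.
have E : \sum_i \sum_j (a i * b j - a j * b i) ^+ 2 =
  2 * ((\sum_t a t ^+ 2) * (\sum_t b t ^+ 2) - (\sum_t a t * b t) ^+ 2).
  have E1 : forall i j, (a i * b j - a j * b i) ^+ 2 =
     a i ^+ 2 * b j ^+ 2 + b i ^+ 2 * a j ^+ 2 - 2 * ((a i * b i) * (a j * b j)).
    by move=> i j; ring.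
  rewrite (eq_bigr (fun i => a i ^+ 2 * (\sum_j b j ^+ 2) + b i ^+ 2 * (\sum_j a j ^+ 2)
     - 2 * ((a i * b i) * \sum_j (a j * b j)))); last first.
    move=> i _; rewrite (eq_bigr _ (fun j _ => E1 i j)) !mulr_sumr -big_split -sumrB /=.
    by apply: eq_bigr => j _; ring.
  rewrite sumrB big_split /= -!mulr_suml -mulr_sumr -mulr_suml.
  rewrite (mulrC (\sum_i b i ^+ 2)); ring.
move: H; rewrite E pmulr_rge0 // subr_ge0 //.
Qed.

Lemma minkowski_sum (T : finType) (a b : T -> R) :
  Num.sqrt (\sum_t (a t + b t) ^+ 2) <=
  Num.sqrt (\sum_t a t ^+ 2) + Num.sqrt (\sum_t b t ^+ 2).
Proof.
set A := \sum_t a t ^+ 2; set B := \sum_t b t ^+ 2.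
have A0 : 0 <= A by apply: sumr_ge0 => t _; exact: sqr_ge0.
have B0 : 0 <= B by apply: sumr_ge0 => t _; exact: sqr_ge0.
rewrite -(ger0_norm (addr_ge0 (sqrtr_ge0 A) (sqrtr_ge0 B))) -sqrtr_sqr.
rewrite ler_sqrt ?sqr_ge0 //.
have -> : \sum_t (a t + b t) ^+ 2 = A + B + 2 * \sum_t a t * b t.
  rewrite /A /B -big_split mulr_sumr -big_split /=; apply: eq_bigr => t _; ring.
have -> : (Num.sqrt A + Num.sqrt B) ^+ 2 = A + B + 2 * (Num.sqrt A * Num.sqrt B).
  by rewrite sqrrD !sqr_sqrtr //; ring.
rewrite lerD2l ler_pM2l // -sqrtrM // (le_trans (ler_norm _)) //.
by rewrite -sqrtr_sqr ler_wsqrtr // cs_ineq.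
Qed.

Lemma dot_ge0 p (v : 'rV[R]_p) : 0 <= dot v v.
Proof. by apply: sumr_ge0 => j _; rewrite -expr2 sqr_ge0. Qed.

Lemma enorm_ge0 p (v : 'rV[R]_p) : 0 <= enorm v.
Proof. exact: sqrtr_ge0. Qed.

Lemma enorm_sq p (v : 'rV[R]_p) : enorm v ^+ 2 = \sum_j (v 0 j) ^+ 2.
Proof. rewrite /enorm sqr_sqrtr ?dot_ge0 //; apply: eq_bigr => j _; by rewrite expr2. Qed.

Lemma enormE p (v : 'rV[R]_p) : enorm v = Num.sqrt (\sum_j (v 0 j) ^+ 2).
Proof. rewrite /enorm /dot; congr Num.sqrt; apply: eq_bigr => j _; by rewrite expr2. Qed.

Lemma enormD p (u v : 'rV[R]_p) : enorm (u + v) <= enorm u + enorm v.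
Proof.
rewrite !enormE (eq_bigr (fun j => (u 0 j + v 0 j) ^+ 2)); first exact: minkowski_sum.
by move=> j _; rewrite mxE.
Qed.

Lemma enormZ p (c : R) (v : 'rV[R]_p) : enorm (c *: v) = `|c| * enorm v.
Proof.
rewrite !enormE (eq_bigr (fun j => c ^+ 2 * (v 0 j) ^+ 2)); last first.
  by move=> j _; rewrite mxE exprMn.
by rewrite -mulr_sumr sqrtrM ?sqr_ge0 // sqrtr_sqr.
Qed.

Lemma enormN p (v : 'rV[R]_p) : enorm (- v) = enorm v.
Proof. by rewrite -scaleN1r enormZ normrN normr1 mul1r. Qed.

Lemma enormB_sym p (u v : 'rV[R]_p) : enorm (u - v) = enorm (v - u).
Proof. by rewrite -enormN opprB. Qed.

Lemma enorm_sum p (I : finType) (P : pred I) (v : I -> 'rV[R]_p) :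
  enorm (\sum_(i | P i) v i) <= \sum_(i | P i) enorm (v i).
Proof.
apply: (big_ind2 (fun x y => enorm x <= y)) => //.
- by rewrite enormE big1 ?sqrtr0 // => j _; rewrite mxE expr0n.
- by move=> x1 x2 y1 y2 h1 h2; apply: (le_trans (enormD x1 y1)); exact: lerD.
Qed.

Lemma enorm_triB p (u v w : 'rV[R]_p) : enorm (u - w) <= enorm (u - v) + enorm (v - w).
Proof. by rewrite (_ : u - w = (u - v) + (v - w)) ?enormD // addrA subrK. Qed.

End Norms.


Section MeanDev.
Variables (R : realType) (n p : nat).
Hypothesis n_gt0 : (0 < n)%N.
Local Notation vecs := ('I_n -> 'rV[R]_p).

Definition mean (v : vecs) : 'rV[R]_p := n%:R^-1 *: \sum_(i < n) v i.
Definition dev (v : vecs) : R := Num.sqrt (\sum_(i < n) enorm (v i - mean v) ^+ 2).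

Lemma nR_gt0 : 0 < n%:R :> R.
Proof. by rewrite ltr0n. Qed.

Lemma dev_ge0 v : 0 <= dev v.
Proof. exact: sqrtr_ge0. Qed.

Lemma meanD (u v : vecs) : mean (fun i => u i + v i) = mean u + mean v.
Proof. by rewrite /mean big_split scalerDr. Qed.

Lemma meanZ c (u : vecs) : mean (fun i => c *: u i) = c *: mean u.
Proof. by rewrite /mean -scaler_sumr !scalerA mulrC. Qed.

Lemma meanB (u v : vecs) : mean (fun i => u i - v i) = mean u - mean v.
Proof. by rewrite /mean sumrB scalerBr. Qed.

Lemma mean_mix (C : 'M[R]_n) (v : vecs) :
  (forall j, \sum_(i < n) C i j = 1) -> mean (mix C v) = mean v.
Proof.
move=> Ccol; rewrite /mean /mix exchange_big /=; congr (_ *: _).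
by apply: eq_bigr => j _; rewrite -scaler_suml Ccol scale1r.
Qed.

Lemma enorm_mean_le (v : vecs) (B : R) : (forall i, enorm (v i) <= B) ->
  enorm (mean v) <= B.
Proof.
move=> hv; rewrite /mean enormZ ger0_norm ?invr_ge0 ?ler0n //.
rewrite -(ler_pM2l nR_gt0) mulrA mulfV ?gt_eqF ?nR_gt0 // mul1r.
apply: (le_trans (enorm_sum _ _)).
have -> : n%:R * B = \sum_(i < n) B by rewrite sumr_const card_ord mulr_natl.
by apply: ler_sum => i _.
Qed.

Lemma sub_mean (v : vecs) i : v i - mean v = mean (fun j => v i - v j).
Proof.
rewrite meanB; congr (_ - _); rewrite /mean sumr_const card_ord.
by rewrite -scalerMnr scalerMnl -mulr_natr mulVf ?gt_eqF ?nR_gt0 // scale1r.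
Qed.

Lemma single_le_dev (v : vecs) i : enorm (v i - mean v) <= dev v.
Proof.
rewrite /dev -(ger0_norm (enorm_ge0 (v i - mean v))) -sqrtr_sqr ler_wsqrtr //.
rewrite (bigD1 i) //= lerDl; apply: sumr_ge0 => j _; exact: sqr_ge0.
Qed.

Lemma sqrt_sum_le (a b : 'I_n -> R) : (forall i, 0 <= a i) -> (forall i, a i <= b i) ->
  Num.sqrt (\sum_i a i ^+ 2) <= Num.sqrt (\sum_i b i ^+ 2).
Proof.
move=> a0 ab; rewrite ler_wsqrtr //; apply: ler_sum => i _.
by rewrite ler_sqr // ?nnegrE ?(le_trans (a0 i)).
Qed.

Lemma sqrt_sum_const (B : R) : 0 <= B -> Num.sqrt (\sum_(i < n) B ^+ 2) = Num.sqrt n%:R * B.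
Proof.
move=> B0; rewrite sumr_const card_ord -[_ *+ n]mulr_natl sqrtrM ?ler0n // sqrtr_sqr ger0_norm //.
Qed.

Lemma dev_bound (v : vecs) B : (forall i j, enorm (v i - v j) <= B) ->
  dev v <= Num.sqrt n%:R * B.
Proof.
move=> hv; have B0 : 0 <= B.
  by apply: le_trans (hv (Ordinal n_gt0) (Ordinal n_gt0)); exact: enorm_ge0.
rewrite -sqrt_sum_const //; apply: sqrt_sum_le => i; first exact: enorm_ge0.
by rewrite sub_mean; apply: enorm_mean_le => j; exact: hv.
Qed.

Lemma dev_comb (a b : R) (u z : vecs) : 0 <= a -> 0 <= b ->
  dev (fun i => a *: u i + b *: z i) <= a * dev u + b * dev z.
Proof.
move=> a0 b0; rewrite /dev meanD !meanZ.
apply: le_trans (_ : Num.sqrt (\sum_i (a * enorm (u i - mean u) + b * enorm (z i - mean z)) ^+ 2) <= _).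
  apply: sqrt_sum_le => i; first exact: enorm_ge0.
  rewrite (_ : _ - _ = a *: (u i - mean u) + b *: (z i - mean z)); last first.
    by rewrite !scalerBr addrACA opprD.
  by apply: (le_trans (enormD _ _)); rewrite !enormZ !ger0_norm.
apply: (le_trans (minkowski_sum _ _)); apply: lerD.
  rewrite (eq_bigr (fun i => a ^+ 2 * enorm (u i - mean u) ^+ 2)); last by move=> i _; rewrite exprMn.
  by rewrite -mulr_sumr sqrtrM ?sqr_ge0 // sqrtr_sqr ger0_norm.
rewrite (eq_bigr (fun i => b ^+ 2 * enorm (z i - mean z) ^+ 2)); last by move=> i _; rewrite exprMn.
by rewrite -mulr_sumr sqrtrM ?sqr_ge0 // sqrtr_sqr ger0_norm.
Qed.

End MeanDev.


Definition gamf (R : realType) (k : nat) : R := 2 / (k.+1)%:R.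
Definition etaf (R : realType) (k : nat) : R := 2 / (k.+2)%:R.

Section Algo.
Variables (R : realType) (n p : nat) (Xi : Type) (C : 'M[R]_n)
  (g : 'I_n -> 'rV[R]_p -> Xi -> 'rV[R]_p)
  (lmo : nat -> 'I_n -> 'rV[R]_p -> 'rV[R]_p)
  (x1 : 'I_n -> 'rV[R]_p) (xs : nat -> 'I_n -> Xi).

Local Notation st := (dmfw_st C g lmo (@gamf R) (@etaf R) x1 xs).
Definition Xm m := (st m).1.1.1.
Definition XHm m := (st m).1.1.2.
Definition Ym m := (st m).1.2.
Definition Sm m := (st m).2.

Lemma XH_mix m : XHm m = mix C (Xm m).
Proof.
case: m => [//|m]; rewrite /XHm /Xm /=.
by case: (st m) => [[[? ?] ?] ?].
Qed.

Lemma X_succ m i : Xm m.+1 i =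
  XHm m i + etaf R m.+1 *: (lmo m.+1 i (mix C (Sm m) i) - XHm m i).
Proof.
rewrite /XHm /Xm /Sm /=.
by case: (st m) => [[[? ?] ?] ?].
Qed.

Lemma Y_succ m i : Ym m.+1 i =
  (1 - gamf R m.+2) *: Ym m i + g i (XHm m.+1 i) (xs m.+2 i)
  - (1 - gamf R m.+2) *: g i (XHm m i) (xs m.+2 i).
Proof.
have -> : XHm m.+1 = mix C (Xm m.+1) by rewrite XH_mix.
rewrite /XHm /Xm /Ym /Sm /=.
by case: (st m) => [[[? ?] ?] ?].
Qed.

Lemma Y0 i : Ym 0 i = g i (mix C x1 i) (xs 1 i).
Proof. by []. Qed.

Lemma X0 : Xm 0 = x1.
Proof. by []. Qed.

End Algo.


Lemma arith1 (R : realType) (a b S : R) : 1 <= a -> 0 <= b -> 0 <= S ->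
  (a / (a + 1)) ^+ 2 * ((1 - 2 / (b + 3)) * (a * S / (b + 1)) + 2 / (b + 3) * S)
  <= a * S / (b + 2).
Proof.
move=> a1 b0 S0.
have Ha : a + 1 != 0 by apply/lt0r_neq0; lra.
have Hb1 : b + 1 != 0 by apply/lt0r_neq0; lra.
have Hb2 : b + 2 != 0 by apply/lt0r_neq0; lra.
have Hb3 : b + 3 != 0 by apply/lt0r_neq0; lra.
rewrite -subr_ge0.
have -> : a * S / (b + 2) - (a / (a + 1)) ^+ 2 * ((1 - 2 / (b + 3)) * (a * S / (b + 1)) + 2 / (b + 3) * S)
  = a * S * (a * a + 2 * a + b + 3) / ((a + 1) ^+ 2 * (b + 2) * (b + 3)).
  by field; rewrite ?Ha ?Hb1 ?Hb2 ?Hb3 //= ?mulf_neq0 ?expf_neq0.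
apply: divr_ge0; first by apply: mulr_ge0; [apply: mulr_ge0; lra | nra].
apply: mulr_ge0; [apply: mulr_ge0; [exact: sqr_ge0|lra]|lra].
Qed.

Lemma arith2 (R : realType) (b LC1 LD G : R) : 0 <= b -> 0 <= LC1 -> 0 <= LD -> 0 <= G ->
  LC1 / (b + 2) + LC1 / (b + 1) + (2 / (b + 3)) * LD + (2 / (b + 3)) * (LD + G)
  <= (2 / (b + 3)) * (2 * G + 2 * LD + 4 * LC1).
Proof.
move=> b0 c0 d0 g0.
have Hb1 : b + 1 != 0 by apply/lt0r_neq0; lra.
have Hb2 : b + 2 != 0 by apply/lt0r_neq0; lra.
have Hb3 : b + 3 != 0 by apply/lt0r_neq0; lra.
rewrite -subr_ge0.
have -> : (2 / (b + 3)) * (2 * G + 2 * LD + 4 * LC1) -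
  (LC1 / (b + 2) + LC1 / (b + 1) + (2 / (b + 3)) * LD + (2 / (b + 3)) * (LD + G))
  = (2 * G * (b + 1) * (b + 2) + LC1 * (6 * b * b + 15 * b + 7)) / ((b + 1) * (b + 2) * (b + 3)).
  by field; rewrite ?Hb1 ?Hb2 ?Hb3 //= ?mulf_neq0.
apply: divr_ge0; last by apply: mulr_ge0; [apply: mulr_ge0|]; lra.
apply: addr_ge0; first by apply: mulr_ge0; [apply: mulr_ge0|]; lra.
by apply: mulr_ge0 => //; nra.
Qed.

Section Invariants.
Variables (R : realType) (n p : nat) (Xi : Type) (C : 'M[R]_n)
  (g : 'I_n -> 'rV[R]_p -> Xi -> 'rV[R]_p)
  (lmo : nat -> 'I_n -> 'rV[R]_p -> 'rV[R]_p)
  (x1 : 'I_n -> 'rV[R]_p) (xs : nat -> 'I_n -> Xi)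
  (X : set 'rV[R]_p) (D L slam : R) (k0 : nat).
Hypothesis n_gt0 : (0 < n)%N.
Hypothesis C0 : forall i j, 0 <= C i j.
Hypothesis Crow : forall i, \sum_(j < n) C i j = 1.
Hypothesis Ccol : forall j, \sum_(i < n) C i j = 1.
Hypothesis Hcontr : forall v : 'I_n -> 'rV[R]_p,
     let vbar := n%:R^-1 *: \sum_(i < n) v i in
     Num.sqrt (\sum_(i < n) enorm (mix C v i - vbar) ^+ 2)
       <= slam * Num.sqrt (\sum_(i < n) enorm (v i - vbar) ^+ 2).
Hypothesis k0_gt0 : (0 < k0)%N.
Hypothesis Hslam : slam <= (k0%:R / (k0.+1)%:R) ^+ 2.
Hypothesis XD : forall x y, X x -> X y -> enorm (x - y) <= D.
Hypothesis Hlmo : forall k i v, X (lmo k i v).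
Hypothesis Hx1 : forall i, X (x1 i).
Hypothesis L0 : 0 <= L.
Hypothesis Lip : forall i x y z, enorm (g i x z - g i y z) <= L * enorm (x - y).

Let i0 : 'I_n := Ordinal n_gt0.

Lemma D_ge0 : 0 <= D.
Proof. by apply: le_trans (XD (Hx1 i0) (Hx1 i0)); exact: enorm_ge0. Qed.

Definition inS (v : 'rV[R]_p) := forall z, X z -> enorm (v - z) <= D.

Lemma inS_mix (v : 'I_n -> 'rV[R]_p) i : (forall j, inS (v j)) -> inS (mix C v i).
Proof.
move=> hv z Xz; rewrite /mix.
have -> : z = \sum_(j < n) C i j *: z by rewrite -scaler_suml Crow scale1r.
rewrite -sumrB.
apply: (le_trans (enorm_sum _ _)).
apply: le_trans (_ : \sum_(j < n) C i j * D <= _); last by rewrite -mulr_suml Crow mul1r.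
apply: ler_sum => j _; rewrite -scalerBr enormZ ger0_norm //.
by apply: ler_wpM2l => //; exact: hv.
Qed.

Lemma inS_comb (a b : 'rV[R]_p) (e : R) : 0 <= e <= 1 -> inS a -> X b ->
  inS (a + e *: (b - a)).
Proof.
move=> /andP[e0 e1] ha Xb z Xz.
have -> : a + e *: (b - a) - z = (1 - e) *: (a - z) + e *: (b - z).
  by apply/rowP => j; rewrite !mxE; ring.
apply: (le_trans (enormD _ _)); rewrite !enormZ !ger0_norm ?subr_ge0 //.
have := ha z Xz; have := XD Xb Xz; move: (enorm (a - z)) (enorm (b - z)) => u w hw hu.
nra.
Qed.


Local Notation XM := (Xm C g lmo x1 xs).
Local Notation XHM := (XHm C g lmo x1 xs).
Local Notation YM := (Ym C g lmo x1 xs).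
Local Notation SM := (Sm C g lmo x1 xs).

Lemma natS1 m : (m.+1)%:R = m%:R + 1 :> R. Proof. by rewrite -natr1. Qed.
Lemma natS2 m : (m.+2)%:R = m%:R + 2 :> R. Proof. by rewrite -addn2 natrD. Qed.
Lemma natS3 m : (m.+3)%:R = m%:R + 3 :> R. Proof. by rewrite -addn3 natrD. Qed.

Lemma etaf_ge0 k : 0 <= etaf R k.
Proof. by rewrite /etaf divr_ge0 ?ler0n. Qed.
Lemma etaf_le1 k : etaf R k <= 1.
Proof. rewrite /etaf ler_pdivrMr ?ltr0Sn // mul1r natS2; have := ler0n R k; lra. Qed.
Lemma gamf_ge0 k : 0 <= gamf R k.
Proof. by rewrite /gamf divr_ge0 ?ler0n. Qed.
Lemma gamf_le1 k : (0 < k)%N -> gamf R k <= 1.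
Proof.
case: k => // k _; rewrite /gamf ler_pdivrMr ?ltr0Sn // mul1r natS2; have := ler0n R k; lra.
Qed.

Lemma inv_S m i : inS (XM m i) /\ inS (XHM m i).
Proof.
elim: m i => [|m IH] i.
  have h : forall j, inS (XM 0 j) by move=> j z Xz; rewrite X0; exact: XD.
  by split => //; rewrite XH_mix; apply: inS_mix.
have h : forall j, inS (XM m.+1 j).
  move=> j; rewrite X_succ; apply: inS_comb => //.
    by rewrite etaf_ge0 etaf_le1.
  by case: (IH j).
by split => //; rewrite XH_mix; apply: inS_mix.
Qed.

Lemma dev_mix (v : 'I_n -> 'rV[R]_p) : dev (mix C v) <= slam * dev v.
Proof. by rewrite /dev mean_mix //; exact: (Hcontr v). Qed.

Let rho := (k0%:R / (k0.+1)%:R) ^+ 2 : R.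

Lemma rho_le1 : rho <= 1.
Proof.
rewrite /rho; have h0 : 0 <= k0%:R / (k0.+1)%:R :> R by rewrite divr_ge0 ?ler0n.
have h1 : k0%:R / (k0.+1)%:R <= 1 :> R by rewrite ler_pdivrMr ?ltr0Sn // mul1r ler_nat.
by rewrite exprn_ile1.
Qed.

Definition C1 := k0%:R * Num.sqrt n%:R * D.

Lemma dev_XH m : dev (XHM m) <= C1 / (m.+1)%:R.
Proof.
have S0 : 0 <= Num.sqrt n%:R * D by rewrite mulr_ge0 ?sqrtr_ge0 ?D_ge0.
have k1 : 1 <= k0%:R :> R by rewrite ler1n.
elim: m => [|m IH].
  rewrite XH_mix X0 divr1; apply: (le_trans (dev_mix _)).
  have h1 : dev x1 <= Num.sqrt n%:R * D by apply: dev_bound => // i j; apply: XD.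
  have h2 := dev_ge0 x1; have h3 : slam <= 1 by apply: le_trans Hslam rho_le1.
  rewrite /C1 -mulrA; move: (dev x1) h1 h2 => t h1 h2; nra.
rewrite XH_mix; apply: (le_trans (dev_mix _)).
set e := etaf R m.+1.
set th := fun i => lmo m.+1 i (mix C (SM m) i).
have EX : XM m.+1 = fun i => (1 - e) *: XHM m i + e *: th i.
  by apply: funext => i; rewrite X_succ /th /e; apply/rowP => j; rewrite !mxE; ring.
have hth : dev th <= Num.sqrt n%:R * D.
  by apply: dev_bound => // i j; apply: XD; apply: Hlmo.
have e0 := etaf_ge0 m.+1; have e1 := etaf_le1 m.+1.
have hc : dev (fun i => (1 - e) *: XHM m i + e *: th i) <= (1 - e) * dev (XHM m) + e * dev th.
  by apply: dev_comb => //; rewrite subr_ge0.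
rewrite EX.
have hd0 := dev_ge0 (fun i => (1 - e) *: XHM m i + e *: th i).
have hrho : slam * dev (fun i => (1 - e) *: XHM m i + e *: th i)
   <= rho * dev (fun i => (1 - e) *: XHM m i + e *: th i) by apply: ler_wpM2r.
apply: (le_trans hrho).
have rho0 : 0 <= rho by rewrite /rho sqr_ge0.
apply: le_trans (_ : rho * ((1 - e) * (C1 / (m.+1)%:R) + e * (Num.sqrt n%:R * D)) <= _).
  apply: ler_wpM2l => //; apply: (le_trans hc); apply: lerD.
    by apply: ler_wpM2l => //; rewrite subr_ge0.
  by apply: ler_wpM2l.
have := arith1 k1 (ler0n R m) S0.
rewrite /rho /e /etaf /C1 (natS3 m) (natS2 m) (natS1 m) (natS1 k0) -!(mulrA k0%:R).
by [].
Qed.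


Definition Db m := C1 / (m.+2)%:R + etaf R m.+1 * D + C1 / (m.+1)%:R.

Lemma Delta m i : enorm (XHM m.+1 i - XHM m i) <= Db m.
Proof.
set M' := mean (XHM m.+1); set M := mean (XHM m).
have t1 := enorm_triB (XHM m.+1 i) M' (XHM m i).
have t2 := enorm_triB M' M (XHM m i).
have h1 : enorm (XHM m.+1 i - M') <= C1 / (m.+2)%:R.
  exact: le_trans (single_le_dev _ _) (dev_XH m.+1).
have h3 : enorm (M - XHM m i) <= C1 / (m.+1)%:R.
  by rewrite enormB_sym; exact: le_trans (single_le_dev _ _) (dev_XH m).
have h2 : enorm (M' - M) <= etaf R m.+1 * D.
  have -> : M' = mean (fun i => XHM m i + etaf R m.+1 *: (lmo m.+1 i (mix C (SM m) i) - XHM m i)).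
    rewrite /M' XH_mix mean_mix //; congr mean; apply: funext => j; exact: X_succ.
  rewrite meanD meanZ /M addrC addKr enormZ ger0_norm ?etaf_ge0 //.
  apply: ler_wpM2l; first exact: etaf_ge0.
  apply: (enorm_mean_le n_gt0) => j; rewrite enormB_sym; case: (inv_S m j) => _ h; exact: h.
rewrite /Db; apply: (le_trans t1); rewrite -addrA; apply: lerD => //.
by apply: (le_trans t2); apply: lerD.
Qed.

Lemma Ybound m i c : X c -> enorm (YM m.+1 i) <=
  (1 - gamf R m.+2) * enorm (YM m i) + L * Db m
  + gamf R m.+2 * (enorm (g i c (xs m.+2 i)) + L * D).
Proof.
move=> Xc.
set gm := gamf R m.+2.
have gm0 : 0 <= gm := gamf_ge0 _.
have gm1 : gm <= 1 := gamf_le1 (isT : (0 < m.+2)%N).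
rewrite Y_succ.
set g1 := g i (XHM m.+1 i) (xs m.+2 i); set g0 := g i (XHM m i) (xs m.+2 i).
have -> : (1 - gamf R m.+2) *: YM m i + g1 - (1 - gamf R m.+2) *: g0 =
  (1 - gm) *: YM m i + (g1 - g0) + gm *: g0 by apply/rowP => j; rewrite /gm !mxE; ring.
apply: (le_trans (enormD _ _)); apply: lerD.
  apply: (le_trans (enormD _ _)); rewrite enormZ ger0_norm ?subr_ge0 //; apply: lerD => //.
  by apply: (le_trans (Lip _ _ _ _)); apply: ler_wpM2l => //; exact: Delta.
rewrite enormZ ger0_norm //; apply: ler_wpM2l => //.
have -> : g0 = g i c (xs m.+2 i) + (g0 - g i c (xs m.+2 i)) by rewrite addrC subrK.
apply: (le_trans (enormD _ _)); apply: lerD => //.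
apply: (le_trans (Lip _ _ _ _)); apply: ler_wpM2l => //.
by case: (inv_S m i) => _ h; exact: h.
Qed.

End Invariants.


Section Prob.
Context (R : realType) (d : measure_display) (Omega : measurableType d).
Variable P : probability Omega R.

Lemma le_int_nonmeas (f h : Omega -> R) :
  (forall w, 0 <= f w) -> (forall w, f w <= h w) ->
  (\int[P]_w (f w)%:E <= \int[P]_w (h w)%:E)%E.
Proof.
move=> f0 fh.
have h0 : forall w, (0 <= h w)%R by move=> w; exact: le_trans (f0 w) (fh w).
rewrite !ge0_integralTE; last 2 first.
- by move=> w; rewrite lee_fin.
- by move=> w; rewrite lee_fin.
apply: ereal_sup_le => _ [s /= hs <-]; exists s => //= w.
by apply: le_trans (hs w) _; rewrite lee_fin.
Qed.

Lemma enorm_meas p (v : Omega -> 'rV[R]_p) :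
  (forall j, measurable_fun setT (fun w => v w 0 j)) ->
  measurable_fun setT (fun w => enorm (v w)).
Proof.
move=> hv.
rewrite (_ : (fun w => enorm (v w)) = Num.sqrt \o (fun w => \sum_j (v w 0 j) ^+ 2)%R); last first.
  by apply: funext => w; rewrite enormE.
apply: measurableT_comp; first exact: continuous_measurable_fun (@sqrt_continuous R).
apply: measurable_sum => j; exact: measurable_funX.
Qed.

Lemma transfer dxi (Xi : measurableType dxi) (phi1 phi2 : Omega -> Xi) (h : Xi -> R) :
  measurable_fun setT phi1 -> measurable_fun setT phi2 ->
  (forall A, measurable A -> P (phi1 @^-1` A) = P (phi2 @^-1` A)) ->
  measurable_fun setT h -> (forall z, 0 <= h z) ->
  (\int[P]_w (h (phi1 w))%:E = \int[P]_w (h (phi2 w))%:E)%E.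
Proof.
move=> m1 m2 e12 mh h0.
have mh' : measurable_fun [set: Xi] (fun z => (h z)%:E) by exact/measurable_EFinP.
have h0' : {in [set: Xi], forall z, (0 <= (fun z => (h z)%:E) z)%E} by move=> z _; rewrite /= lee_fin.
have E1 := ge0_integral_pushforward m1 P measurableT mh' h0'.
have E2 := ge0_integral_pushforward m2 P measurableT mh' h0'.
rewrite !preimage_setT in E1 E2.
rewrite -[LHS]/(\int[P]_(w in setT) ((fun z => (h z)%:E) \o phi1) w)%E -E1.
rewrite -[RHS]/(\int[P]_(w in setT) ((fun z => (h z)%:E) \o phi2) w)%E -E2.
apply: eq_measure_integral => A mA _; rewrite /pushforward.
exact: e12.
Qed.

End Prob.

Unset Implicit Arguments.
Set Strict Implicit.

Theorem lemma8
  (R : realType) (n p : nat)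
  (* communication graph and weight matrix *)
  (E : rel 'I_n) (C : 'M[R]_n) (slam : R) (k0 : nat)
  (* problem data *)
  (X : set 'rV[R]_p) (D L G delta : R)
  (d : measure_display) (Omega : measurableType d) (P : probability Omega R)
  (dxi : measure_display) (Xi : measurableType dxi)
  (xi0 : 'I_n -> Omega -> Xi)                (* xi^i *)
  (f : 'I_n -> 'rV[R]_p -> Xi -> R)          (* f_i(x, xi) *)
  (g : 'I_n -> 'rV[R]_p -> Xi -> 'rV[R]_p)   (* grad_x f_i(x, xi) *)
  (* algorithm data *)
  (x1 : 'I_n -> 'rV[R]_p)
  (xi : nat -> 'I_n -> Omega -> Xi)          (* xi_k^i *)
  (lmo : nat -> 'I_n -> 'rV[R]_p -> 'rV[R]_p) :
  (1 < n)%N ->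
  (* graph *)
  (forall i j, E i j = E j i) ->
  (forall i j, connect E i j) ->
  (forall i j, 0 <= C i j) ->
  (forall i j, j != i -> ~~ E i j -> C i j = 0) ->
  (forall i, \sum_(j < n) C i j = 1) ->
  (forall j, \sum_(i < n) C i j = 1) ->
  second_eig_modulus C slam ->
  slam < 1 ->
  (forall v : 'I_n -> 'rV[R]_p,
     let vbar := n%:R^-1 *: \sum_(i < n) v i in
     Num.sqrt (\sum_(i < n) enorm (mix C v i - vbar) ^+ 2)
       <= slam * Num.sqrt (\sum_(i < n) enorm (v i - vbar) ^+ 2)) ->
  (0 < k0)%N ->
  slam <= (k0%:R / (k0.+1)%:R) ^+ 2 ->
  (forall m : nat, (0 < m < k0)%N -> (m%:R / (m.+1)%:R) ^+ 2 < slam) ->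
  (* constraint set *)
  convex_set X -> compact X ->
  (forall x y, X x -> X y -> enorm (x - y) <= D) ->
  (* random variables *)
  (forall i, measurable_fun setT (xi0 i)) ->
  (* smoothness of f_i(., xi) *)
  (forall i x z, has_grad (fun y => f i y z : R^o) x (g i x z)) ->
  (forall i x y z, enorm (g i x z - g i y z) <= L * enorm (x - y)) ->
  (forall i x j, measurable_fun setT (fun z => g i x z 0 j)) ->
  (* F_i(x) = E f_i(x, xi^i), grad F_i(x) = E grad f_i(x, xi^i), L-smooth *)
  (forall i x, P.-integrable setT (fun w => (f i x (xi0 i w))%:E)) ->
  (forall i x j, P.-integrable setT (fun w => (g i x (xi0 i w) 0 j)%:E)) ->
  (let F i x := fine (\int[P]_w (f i x (xi0 i w))%:E) in
   let gradF i x := \row_(j < p) fine (\int[P]_w (g i x (xi0 i w) 0 j)%:E) in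
   (forall i x, has_grad (fun y => F i y : R^o) x (gradF i x)) /\
   (forall i x y, enorm (gradF i x - gradF i y) <= L * enorm (x - y)) /\
   (forall i x, X x ->
      (\int[P]_w ((enorm (gradF i x - g i x (xi0 i w))) ^+ 2)%:E
         <= (delta ^+ 2)%:E)%E)) ->
  0 < G ->
  (forall i x, X x ->
     (\int[P]_w ((enorm (g i x (xi0 i w))) ^+ 2)%:E <= (G ^+ 2)%:E)%E) ->
  (forall i x, X x ->
     (\int[P]_w (enorm (g i x (xi0 i w)))%:E <= G%:E)%E) ->
  (* the samples xi_k^i : independent copies of xi^i *)
  (forall k i, measurable_fun setT (xi k i)) ->
  mutually_independent P [set ki : nat * 'I_n | (0 < ki.1)%N]
    (fun ki => xi ki.1 ki.2) ->
  (forall k i A, (0 < k)%N -> measurable A ->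
     P (xi k i @^-1` A) = P (xi0 i @^-1` A)) ->
  (* linear minimization oracle: theta_k^i in argmin_{phi in X} <p_k^i, phi> *)
  (forall k i v, X (lmo k i v) /\
     forall phi, X phi -> dot v (lmo k i v) <= dot v phi) ->
  (forall k i, borel_vmap (lmo k i)) ->
  (* deterministic initial points *)
  (forall i, X (x1 i)) ->
  let gam := fun k : nat => 2 / (k.+1)%:R in
  let eta := fun k : nat => 2 / (k.+2)%:R in
  let y := fun k i w => dmfw_y C g lmo gam eta x1 (fun k i => xi k i w) k i in
  let C1 := k0%:R * Num.sqrt n%:R * D in
  let psi := Order.max (\big[Order.max/-oo%E]_(i < n) (\int[P]_w (enorm (y 1%N i w))%:E))%E
                       (2 * G + 2 * L * (D + 2 * C1))%:E in
  forall (i : 'I_n) (k : nat), (0 < k)%N ->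
    (\int[P]_w (enorm (y k i w))%:E <= psi)%E.
Proof.
move=> Hn Hsym Hconn HC0 HCE Hrow Hcol Heig Hslam1 Hcontr Hk0 Hslamk0 Hmin Hconv
  Hcomp HXD Hxi0m Hgrad HLip Hgm Hfint Hgint HF HG0 HG2 HG1 Hxim Hindep Hdist
  Hlmo Hlmob Hx1 gam eta y C1' psi i k hk.
have n_gt0 : (0 < n)%N by apply: ltn_trans Hn.
have HlmoX : forall k i v, X (lmo k i v) by move=> k' i' v; case: (Hlmo k' i' v).
have psi_ge1 : (\int[P]_w (enorm (y 1%N i w))%:E <= psi)%E.
  rewrite /psi le_max; apply/orP; left.
  exact: (le_bigmax -oo%E (fun j : 'I_n => \int[P]_w (enorm (y 1%N j w))%:E)%E i).
have psi_ge2 : ((2 * G + 2 * L * (D + 2 * C1'))%:E <= psi)%E.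
  by rewrite /psi le_max lexx orbT.
clearbody psi.
have [p0|p_gt0] := eqVneq p 0%N.
  subst p.
  have e0 : forall v : 'rV[R]_0, enorm v = 0.
    by move=> v; rewrite enormE big_ord0 sqrtr0.
  apply: le_trans psi_ge1.
  by rewrite le_eqVlt; apply/orP; left; apply/eqP; congr integral; apply: funext => w; rewrite !e0.
have D0 : 0 <= D by apply: le_trans (HXD _ _ (Hx1 i) (Hx1 i)); exact: enorm_ge0.
have [w0 _] : exists w : Omega, True.
  apply: contrapT => nw.
  have h : [set: Omega] = set0 by apply/seteqP; split => // w _; apply: nw; exists w.
  by have := probability_setT P; rewrite h measure0 => /esym /eqP; rewrite onee_eq0.
have L0 : 0 <= L.
  pose u : 'rV[R]_p := const_mx 1.
  have hu : 0 < enorm u.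
    rewrite enormE sqrtr_gt0 (eq_bigr (fun _ => 1)); last by move=> j _; rewrite mxE expr1n.
    by rewrite sumr_const card_ord ltr0n lt0n.
  have := HLip i u 0 (xi0 i w0); rewrite subr0 => h.
  have := enorm_ge0 (g i u (xi0 i w0) - g i 0 (xi0 i w0)).
  move: h; move: (enorm (g i u (xi0 i w0) - g i 0 (xi0 i w0))) => t h t0.
  have : 0 <= L * enorm u by apply: le_trans h.
  by rewrite pmulr_lge0.
move: psi psi_ge1 psi_ge2 => [r| |] psi_ge1 psi_ge2; last 2 first.
- by rewrite leey.
- by move: psi_ge2; rewrite leeNy_eq.
rewrite lee_fin in psi_ge2.
set c := x1 i.
have Xc : X c := Hx1 i.
pose U := fix U (m : nat) (w : Omega) {struct m} : R :=
  match m with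
  | 0%N => enorm (y 1%N i w)
  | m'.+1 => (1 - gamf R m'.+2) * U m' w
             + (L * Db n D k0 m' + gamf R m'.+2 * (L * D))
             + gamf R m'.+2 * enorm (g i c (xi m'.+2 i w))
  end.
have claim1 : forall m w, enorm (y m.+1 i w) <= U m w.
  elim => [|m IH] w; first by [].
  have -> : y m.+2 i w = Ym C g lmo x1 (fun k i => xi k i w) m.+1 i by [].
  have Hb := Ybound (fun k i => xi k i w) n_gt0 HC0 Hrow Hcol Hcontr Hk0 Hslamk0 HXD HlmoX Hx1 L0 HLip m i Xc.
  apply: (le_trans Hb) => /=.
  rewrite -!addrA; apply: lerD.
    apply: ler_wpM2l; first by rewrite subr_ge0 gamf_le1.
    exact: IH.
  by rewrite le_eqVlt; apply/orP; left; apply/eqP; ring.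
have mh : forall kk x, measurable_fun setT (fun w => enorm (g i x (xi kk i w))).
  move=> kk x; apply: enorm_meas => j.
  exact: (measurableT_comp (f := fun z => g i x z 0 j) (Hgm i x j) (Hxim kk i)).
have claim2 : forall m, measurable_fun setT (U m) /\ forall w, 0 <= U m w.
  elim => [|m [IHm IH0]].
    split; last by move=> w; exact: enorm_ge0.
    exact: (mh 1%N (mix C x1 i)).
  have gm0 := gamf_ge0 R m.+2; have gm1 := gamf_le1 R (isT : (0 < m.+2)%N).
  split.
    apply: measurable_funD; first apply: measurable_funD.
    - by apply: measurable_funM => //; try exact: measurable_cst.
    - exact: measurable_cst.
    - by apply: measurable_funM => //; try exact: measurable_cst; try exact: mh.
  move=> w /=.
  have hD : 0 <= Db n D k0 m.
    rewrite /Db /C1; apply: addr_ge0; first apply: addr_ge0.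
    - by apply: divr_ge0 => //; apply: mulr_ge0 => //; apply: mulr_ge0 => //; exact: sqrtr_ge0.
    - by apply: mulr_ge0 => //; exact: etaf_ge0.
    - by apply: divr_ge0 => //; apply: mulr_ge0 => //; apply: mulr_ge0 => //; exact: sqrtr_ge0.
  apply: addr_ge0; first apply: addr_ge0.
  - by apply: mulr_ge0 => //; rewrite subr_ge0.
  - by apply: addr_ge0; apply: mulr_ge0 => //; apply: mulr_ge0.
  - by apply: mulr_ge0 => //; exact: enorm_ge0.
have hG : forall kk, (0 < kk)%N -> (\int[P]_w (enorm (g i c (xi kk i w)))%:E <= G%:E)%E.
  move=> kk kk0.
  rewrite (transfer (P := P) (phi2 := xi0 i) (h := fun z => enorm (g i c z)) (Hxim kk i) (Hxi0m i)) //.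
  - exact: HG1.
  - by move=> A mA; exact: Hdist.
  - apply: enorm_meas => j; exact: Hgm.
  - by move=> z; exact: enorm_ge0.
have claim3 : forall m, (\int[P]_w (U m w)%:E <= r%:E)%E.
  elim => [|m IH]; first exact: psi_ge1.
  have [mU U0] := claim2 m.
  have gm0 := gamf_ge0 R m.+2; have gm1 := gamf_le1 R (isT : (0 < m.+2)%N).
  set a := 1 - gamf R m.+2; set b := gamf R m.+2.
  set K := L * Db n D k0 m + b * (L * D).
  set h := fun w => enorm (g i c (xi m.+2 i w)).
  have a0 : 0 <= a by rewrite /a subr_ge0.
  have h0 : forall w, 0 <= h w by move=> w; exact: enorm_ge0.
  have mh' : measurable_fun setT h by exact: mh.
  have K0 : 0 <= K.
    rewrite /K /Db /C1.
    apply: addr_ge0; last by apply: mulr_ge0 => //; apply: mulr_ge0.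
    apply: mulr_ge0 => //; apply: addr_ge0; first apply: addr_ge0.
    + by apply: divr_ge0 => //; apply: mulr_ge0 => //; apply: mulr_ge0 => //; exact: sqrtr_ge0.
    + by apply: mulr_ge0 => //; exact: etaf_ge0.
    + by apply: divr_ge0 => //; apply: mulr_ge0 => //; apply: mulr_ge0 => //; exact: sqrtr_ge0.
  have EU : (fun w => (U m.+1 w)%:E) = (fun w => ((a * U m w)%:E + (K + b * h w)%:E))%E.
    by apply: funext => w; rewrite -!EFinD addrA.
  have I1 : (\int[P]_w ((a * U m w)%:E) = a%:E * \int[P]_w (U m w)%:E)%E.
    under eq_integral do rewrite EFinM.
    rewrite ge0_integralZl_EFin //; first by move=> x _; rewrite lee_fin.
    exact/measurable_EFinP.
  have I2 : (\int[P]_w ((K + b * h w)%:E) = K%:E + b%:E * \int[P]_w (h w)%:E)%E.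
    under eq_integral do rewrite EFinD.
    rewrite ge0_integralD //; try (by move=> x _; rewrite lee_fin ?mulr_ge0);
      try (by apply/measurable_EFinP; apply: measurable_funM => //; exact: measurable_cst).
    rewrite integral_cst //.
    rewrite [X in (_ * X + _)%E](_ : _ = 1%E); last exact: probability_setT.
    rewrite mule1; congr (_ + _)%E.
    under eq_integral do rewrite EFinM.
    rewrite ge0_integralZl_EFin //; try (by move=> x _; rewrite lee_fin).
    exact/measurable_EFinP.
  rewrite EU ge0_integralD //; try (by move=> x _; rewrite lee_fin ?mulr_ge0 ?addr_ge0 ?mulr_ge0);
    try (apply/measurable_EFinP; apply: measurable_funM => //; exact: measurable_cst);
    try (apply/measurable_EFinP; apply: measurable_funD; [exact: measurable_cst|];
         apply: measurable_funM => //; exact: measurable_cst).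
  rewrite I1 I2.
  have IU0 : (0 <= \int[P]_w (U m w)%:E)%E by apply: integral_ge0 => x _; rewrite lee_fin.
  have Ih0 : (0 <= \int[P]_w (h w)%:E)%E by apply: integral_ge0 => x _; rewrite lee_fin.
  have IhG : (\int[P]_w (h w)%:E <= G%:E)%E by exact: hG.
  move: (\int[P]_w (U m w)%:E)%E IU0 IH => [u| |] IU0 IHu;
    [ | by move: IHu; rewrite leye_eq | by move: IU0; rewrite leeNy_eq].
  move: (\int[P]_w (h w)%:E)%E Ih0 IhG => [v| |] Ih0 IhG;
    [ | by move: IhG; rewrite leye_eq | by move: Ih0; rewrite leeNy_eq].
  rewrite lee_fin in IHu; rewrite lee_fin in IhG.
  rewrite -!EFinM -!EFinD lee_fin.
  have C10 : 0 <= C1' by rewrite /C1'; apply: mulr_ge0 => //; apply: mulr_ge0 => //; exact: sqrtr_ge0.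
  have key : K + b * G <= b * (2 * G + 2 * L * (D + 2 * C1')).
    have A := arith2 (ler0n R m) (mulr_ge0 L0 C10) (mulr_ge0 L0 D0) (ltW HG0).
    have E1 : K + b * G = L * C1' / (m%:R + 2) + L * C1' / (m%:R + 1) +
       2 / (m%:R + 3) * (L * D) + 2 / (m%:R + 3) * (L * D + G).
      by rewrite /K /b /Db /C1 /C1' /gamf /etaf (natS3 R m) (natS2 R m) (natS1 R m); ring.
    have E2 : b * (2 * G + 2 * L * (D + 2 * C1')) = 2 / (m%:R + 3) * (2 * G + 2 * (L * D) + 4 * (L * C1')).
      by rewrite /b /gamf (natS3 R m); ring.
    by rewrite E1 E2.
  have p1 : a * u <= a * r by apply: ler_wpM2l.
  have p2 : b * v <= b * G by apply: ler_wpM2l.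
  have p3 : b * (2 * G + 2 * L * (D + 2 * C1')) <= b * r by apply: ler_wpM2l.
  have eq : a * r + b * r = r by rewrite /a /b; ring.
  lra.
- by move=> x _; rewrite lee_fin mulr_ge0 // (U0 x).
- by move=> x _; rewrite lee_fin addr_ge0 // mulr_ge0.
case: k hk => // m _.
apply: le_trans (claim3 m).
apply: le_int_nonmeas => w; first exact: enorm_ge0.
exact: claim1.
Qed.
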